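(* Let $\lambda>0$ and consider the Yule (pure-birth) tree with speciation rate $\lambda$ started from an initial bifurcation. For $n\ge 2$, let $P_n$ (respectively $I_n$) be the expected sum of the lengths of the pendant (respectively interior) edges of the tree at the moment just before the $(n+1)$-st leaf appears, i.e. the tree with $n$ leaves observed at the end of the period during which it has exactly $n$ leaves. Set $p_n=P_n/n$ and $i_n=I_n/(n-2)$. Then for all $n\ge 3$, $$i_n=p_n=\frac{1}{2\lambda}.$$ (In particular $P_n=\frac{n}{2\lambda}$ for all $n\ge 2$.) *)

(* Defs.v *)
From HB Require Import structures.
From mathcomp Require Import all_boot all_order all_algebra.
From mathcomp Require Import all_classical all_reals all_analysis.
Set Implicit Arguments. Unset Strict Implicit. Unset Printing Implicit Defensive.
Import Order.TTheory GRing.Theory Num.Theory.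
Local Open Scope ring_scope.
Local Open Scope classical_set_scope.
Local Open Scope ereal_scope.

(* State of a Yule tree under construction:
   - ytime     : current time (the initial bifurcation is at time 0),
   - ybirths   : for each current leaf (index 0..k-1), the birth time of
                 its pendant edge (time of the split that created it),
   - yinterior : total length of the edges that are already interior
                 (edges whose lower end has already split). *)
Record ystate (R : realType) := YState {
  ytime : R; ybirths : seq R; yinterior : R }.

Definition yinit (R : realType) : ystate R := YState 0%R [:: 0%R; 0%R] 0%R.

Definition yadvance (R : realType) (s : ystate R) (t : R) : ystate R :=
  YState (ytime s + t)%R (ybirths s) (yinterior s).

(* Leaf i splits at the current time: its pendant edge becomes interior
   and two new pendant edges are born (stored at index i and at the end). *)
Definition ysplit (R : realType) (s : ystate R) (i : nat) : ystate R :=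
  YState (ytime s)
         (rcons (set_nth 0%R (ybirths s) i (ytime s)) (ytime s))
         (yinterior s + (ytime s - nth 0%R (ybirths s) i))%R.

Definition ypendant (R : realType) (s : ystate R) : R :=
  (\sum_(b <- ybirths s) (ytime s - b))%R.

(* Expectation of F(final state) for the Yule process with rate lam
   started in state s with k leaves, observed after m more splits, at the
   end of the period with k+m leaves.  During a period with k leaves the
   holding time is Exp(k*lam), after which a uniformly chosen leaf splits
   (all choices and holding times independent): this is the Markov
   description of the Yule pure-birth tree. *)
Fixpoint yule_expect (R : realType) (lam : R) (F : ystate R -> \bar R)
    (m k : nat) (s : ystate R) {struct m} : \bar R :=
  \int[lebesgue_measure]_(t in `[0%R, +oo[%classic)
     ((k%:R * lam * expR (- (k%:R * lam * t)))%:E *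
      match m with
      | 0 => F (yadvance s t)
      | m'.+1 => (k%:R^-1)%:E *
          \sum_(i < k) yule_expect lam F m' k.+1 (ysplit (yadvance s t) i)
      end).

Definition Pn (R : realType) (lam : R) (n : nat) : \bar R :=
  yule_expect lam (fun s => (ypendant s)%:E) (n - 2) 2 (yinit R).
Definition In (R : realType) (lam : R) (n : nat) : \bar R :=
  yule_expect lam (fun s => (yinterior s)%:E) (n - 2) 2 (yinit R).

(* Main.v *)
Require Import Defs.
From HB Require Import structures.
From mathcomp Require Import all_boot all_order all_algebra.
From mathcomp Require Import all_classical all_reals all_analysis.
From mathcomp Require Import ring lra measurable_realfun.
Import Order.TTheory GRing.Theory Num.Theory.

Section A.
Import numFieldTopology.Exports numFieldNormedType.Exports.
Local Open Scope classical_set_scope.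
Local Open Scope ring_scope.
Variable R : realType.

Lemma dexp (r x : R) : is_derive x 1 (fun t => expR (- (r * t))) (- r * expR (- (r * x))).
Proof.
have H : is_derive x 1 ((- r) \*: (@id R)) (- r * 1).
  exact: is_deriveZ.
have := @is_derive1_comp R expR ((- r) \*: (@id R)) x _ _ (is_derive_expR _) H.
have -> : expR \o ((- r) \*: (@id R)) = (fun t => expR (- (r * t))).
  by apply/funext => t /=; rewrite -mulNr.
by move=> H2; apply: is_derive_eq H2 _; rewrite /= mulr1 mulrC -mulNr.
Qed.

Lemma dF (r x : R) : is_derive x 1 (fun t => - (t + r^-1) * expR (- (r * t)))
   (- expR (- (r * x)) + (x + r^-1) * r * expR (- (r * x))).
Proof.
have H1 : is_derive x 1 (- (@id R + cst r^-1)) (- (1 + 0)).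
  apply: is_deriveN; apply: is_deriveD.
have := is_deriveM H1 (dexp r x).
have -> : (- (@id R + cst r^-1)) * (fun t => expR (- (r * t))) =
   (fun t => - (t + r^-1) * expR (- (r * t))).
  by apply/funext => t.
move=> H; apply: is_derive_eq H _.
rewrite /= addr0 /GRing.scale /= (_ : (- (id + cst r^-1)) x = -(x + r^-1)) //; ring.
Qed.

Lemma cont_of_der (g dg : R -> R) : (forall x : R, is_derive x 1 g (dg x)) -> continuous g.
Proof.
move=> H x; have hd : derivable g x 1 by case: (H x).
exact/differentiable_continuous/derivable1_diffP.
Qed.

Lemma df1 (r x : R) : is_derive x 1 (fun t => r * expR (- (r * t))) (r * (- r * expR (- (r * x)))).
Proof.
have := is_deriveZ r (dexp r x).
have -> : r \*: (fun t => expR (- (r * t))) = (fun t => r * expR (- (r * t))).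
  by apply/funext.
by [].
Qed.

Lemma df2 (r x : R) : is_derive x 1 (fun t => r * expR (- (r * t)) * t)
   (r * expR (- (r * x)) * 1 + x * (r * (- r * expR (- (r * x))))).
Proof.
have := is_deriveM (df1 r x) (is_derive_id x 1).
have -> : (fun t => r * expR (- (r * t))) * id = (fun t => r * expR (- (r * t)) * t).
  by apply/funext.
by [].
Qed.

Lemma cF (r : R) : continuous (fun t => - (t + r^-1) * expR (- (r * t))).
Proof. exact: cont_of_der (dF r). Qed.
Lemma cf1 (r : R) : continuous (fun t => r * expR (- (r * t))).
Proof. exact: cont_of_der (df1 r). Qed.
Lemma cf2 (r : R) : continuous (fun t => r * expR (- (r * t)) * t).
Proof. exact: cont_of_der (df2 r). Qed.
Lemma cF1 (r : R) : continuous (fun t => - expR (- (r * t))).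
Proof.
apply: (@cont_of_der _ (fun x => - (- r * expR (- (r * x))))) => x.
have := is_deriveN (dexp r x).
have -> : - (fun t => expR (- (r * t))) = (fun t => - expR (- (r * t))).
  by apply/funext.
by [].
Qed.

Lemma limF (r : R) : 0 < r -> (fun t => - (t + r^-1) * expR (- (r * t))) x @[x --> +oo] --> 0.
Proof.
move=> r0.
apply/cvgrPdist_le => e e0; near=> x.
have x1 : r^-1 <= x by near: x; apply: nbhs_pinfty_ge; exact: num_real.
have x2 : 4 / (r^2 * e) <= x by near: x; apply: nbhs_pinfty_ge; exact: num_real.
have x0 : 0 <= x by apply: le_trans x1; rewrite invr_ge0 ltW.
have rx0 : 0 <= r * x by rewrite mulr_ge0 // ltW.
have hE := expR_ge1Dxn 1 rx0.
rewrite sub0r mulNr opprK ger0_norm; last first.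
  by rewrite mulr_ge0 ?expR_ge0 // addr_ge0 // invr_ge0 ltW.
rewrite expRN ler_pdivrMr ?expR_gt0 //.
apply: le_trans (ler_wpM2l (ltW e0) hE).
move: x2; rewrite ler_pdivrMr ?mulr_gt0 ?exprn_gt0 // => x2.
have -> : (1 + (r * x) ^+ 2 / (2`!)%:R) = 1 + (r * x) ^+ 2 / 2 by [].
set y := r^-1 in x1 *.
nra.
Unshelve. all: end_near. Qed.

Lemma limF1 (r : R) : 0 < r -> (fun t => - expR (- (r * t))) x @[x --> +oo] --> 0.
Proof.
move=> r0.
apply/cvgrPdist_le => e e0; near=> x.
have x2 : 1 / (r * e) <= x by near: x; apply: nbhs_pinfty_ge; exact: num_real.
have x0 : 0 <= x by apply: le_trans x2; rewrite divr_ge0 // mulr_ge0 // ltW.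
have rx0 : 0 <= r * x by rewrite mulr_ge0 // ltW.
have hE := expR_ge1Dx (r * x).
rewrite sub0r opprK ger0_norm; last by rewrite expR_ge0.
rewrite expRN -[_^-1]div1r ler_pdivrMr ?expR_gt0 //.
apply: le_trans (ler_wpM2l (ltW e0) hE).
move: x2; rewrite ler_pdivrMr ?mulr_gt0 // => x2.
nra.
Unshelve. all: end_near. Qed.


Lemma I1 (r : R) : 0 < r ->
  (\int[lebesgue_measure]_(t in `[0%R, +oo[%classic) (r * expR (- (r * t)))%:E = 1)%E.
Proof.
move=> r0.
rewrite (@ge0_continuous_FTC2y R (fun t => r * expR (- (r * t))) (fun t => - expR (- (r * t))) 0 0).
- by rewrite mulr0 oppr0 expR0 -EFinB sub0r opprK.
- by move=> x _; rewrite mulr_ge0 ?expR_ge0 // ltW.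
- exact/continuous_subspaceT/cf1.
- exact: limF1.
- move=> x _; have := is_deriveN (dexp r x).
  have -> : - (fun t => expR (- (r * t))) = (fun t => - expR (- (r * t))).
    by apply/funext.
  by case.
- by apply: cvg_at_right_filter; exact: cF1.
- move=> x _; rewrite derive1E.
  have := is_deriveN (dexp r x).
  have -> : - (fun t => expR (- (r * t))) = (fun t => - expR (- (r * t))).
    by apply/funext.
  by move=> H; rewrite derive_val mulNr opprK.
Qed.

Lemma I2 (r : R) : 0 < r ->
  (\int[lebesgue_measure]_(t in `[0%R, +oo[%classic) (r * expR (- (r * t)) * t)%:E = (r^-1)%:E)%E.
Proof.
move=> r0.
rewrite (@ge0_continuous_FTC2y R (fun t => r * expR (- (r * t)) * t) (fun t => - (t + r^-1) * expR (- (r * t))) 0 0).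
- by rewrite mulr0 oppr0 expR0 mulr1 add0r -EFinN opprK add0r.
- by move=> x x0; rewrite !mulr_ge0 ?expR_ge0 // ltW.
- exact/continuous_subspaceT/cf2.
- exact: limF.
- by move=> x _; case: (dF r x).
- by apply: cvg_at_right_filter; exact: cF.
- move=> x _; rewrite derive1E; case: (dF r x) => _ ->.
  by field; rewrite gt_eqF.
Qed.


Lemma intg (g : R -> R) : continuous g -> (forall t, 0 <= t -> 0 <= g t) ->
  (\int[lebesgue_measure]_(t in `[0%R, +oo[%classic) (g t)%:E < +oo)%E ->
  lebesgue_measure.-integrable `[0%R, +oo[%classic (fun t => (g t)%:E).
Proof.
move=> cg g0 gi; apply/integrableP; split.
  apply/measurable_EFinP; apply: measurable_funTS.
  exact: continuous_measurable_fun.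
apply: le_lt_trans gi; rewrite le_eqVlt; apply/orP; left; apply/eqP.
apply: eq_integral.
move=> t; rewrite inE /= in_itv /= andbT => t0.
by rewrite /= ger0_norm // g0.
Qed.

Lemma I3 (r A B : R) : 0 < r ->
  (\int[lebesgue_measure]_(t in `[0%R, +oo[%classic)
     ((r * expR (- (r * t)))%:E * (A + B * t)%:E) = (A + B / r)%:E)%E.
Proof.
move=> r0.
have i1 : lebesgue_measure.-integrable `[0%R, +oo[%classic (fun t => (r * expR (- (r * t)))%:E).
  apply: intg; first exact: cf1.
    by move=> t _; rewrite mulr_ge0 ?expR_ge0 // ltW.
  by rewrite I1 // ltry.
have i2 : lebesgue_measure.-integrable `[0%R, +oo[%classic (fun t => (r * expR (- (r * t)) * t)%:E).
  apply: intg; first exact: cf2.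
    by move=> t t0; rewrite !mulr_ge0 ?expR_ge0 // ltW.
  by rewrite I2 // ltry.
transitivity (\int[lebesgue_measure]_(t in `[0%R, +oo[%classic) ((A%:E * (r * expR (- (r * t)))%:E) + (B%:E * (r * expR (- (r * t)) * t)%:E)))%E.
  by apply: eq_integral => t _; rewrite -!EFinM -EFinD; congr EFin; ring.
rewrite integralD //; last 2 first.
- exact: integrableZl.
- exact: integrableZl.
rewrite !integralZl // I1 // I2 //.
by rewrite -!EFinM -EFinD mulr1.
Qed.

End A.

Section B.
Local Open Scope ring_scope.
Variable R : realType.

Lemma sum_shift (T t : R) (l : seq R) :
  \sum_(b <- l) (T + t - b) = \sum_(b <- l) (T - b) + (size l)%:R * t.
Proof.
elim: l => [|x l IH]; first by rewrite !big_nil mul0r addr0.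
rewrite !big_cons IH /= -addn1 natrD; ring.
Qed.

Lemma pend_adv (s : ystate R) t :
  ypendant (yadvance s t) = ypendant s + (size (ybirths s))%:R * t.
Proof. by rewrite /ypendant /= sum_shift. Qed.

Lemma sum_set_nth (T : R) (l : seq R) i : (i < size l)%N ->
  \sum_(b <- set_nth 0 l i T) (T - b) = \sum_(b <- l) (T - b) - (T - nth 0 l i).
Proof.
elim: l i => [|x l IH] [|i] //=.
- by move=> _; rewrite !big_cons subrr add0r; ring.
- by move=> hi; rewrite !big_cons IH //; ring.
Qed.

Lemma pend_split (s : ystate R) i : (i < size (ybirths s))%N ->
  ypendant (ysplit s i) = ypendant s - (ytime s - nth 0 (ybirths s) i).
Proof.
move=> hi; rewrite /ypendant /= -cats1 big_cat big_seq1 /= subrr addr0.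
by rewrite sum_set_nth.
Qed.

Lemma size_split (s : ystate R) i : (i < size (ybirths s))%N ->
  size (ybirths (ysplit s i)) = (size (ybirths s)).+1.
Proof.
by move=> hi; rewrite /= size_rcons size_set_nth; congr S; apply/maxn_idPr.
Qed.

Lemma sum_nth (s : ystate R) k : size (ybirths s) = k ->
  \sum_(i < k) (ytime s - nth 0 (ybirths s) i) = ypendant s.
Proof.
move=> hs; rewrite /ypendant (big_nth 0) hs big_mkord //.
Qed.

Lemma sumP (s : ystate R) k : size (ybirths s) = k ->
  \sum_(i < k) ypendant (ysplit s i) = (k%:R - 1) * ypendant s.
Proof.
move=> hs.
rewrite (eq_bigr (fun i : 'I_k => ypendant s - (ytime s - nth 0 (ybirths s) i))); last first.
  by move=> i _; rewrite pend_split // hs.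
rewrite sumrB sum_nth // sumr_const card_ord -mulr_natl; ring.
Qed.

Lemma sumI (s : ystate R) k : size (ybirths s) = k ->
  \sum_(i < k) yinterior (ysplit s i) = k%:R * yinterior s + ypendant s.
Proof.
by move=> hs; rewrite /= big_split /= sum_nth // sumr_const card_ord mulr_natl.
Qed.

End B.

Section C.
Local Open Scope ring_scope.
Variables (R : realType) (lam a b : R).
Hypothesis hlam : 0 < lam.

Definition cP (k m : nat) : R :=
  (a * (k%:R - 1) + b * m%:R) / (k%:R + m%:R - 1).
Definition cC (k m : nat) : R :=
  a / lam * (1 + ((k%:R + m%:R - 2) * (k%:R + m%:R - 1) - (k%:R - 2) * (k%:R - 1))
                    / (2 * (k%:R + m%:R - 1)))
  + b / lam * (m%:R * (m%:R + 1) / (2 * (k%:R + m%:R - 1))).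

Let F := fun s : ystate R => (a * ypendant s + b * yinterior s)%:E.

Lemma ye0 k s : yule_expect lam F 0 k s =
  (\int[lebesgue_measure]_(t in `[0%R, +oo[%classic)
     ((k%:R * lam * expR (- (k%:R * lam * t)))%:E * F (yadvance s t)))%E.
Proof. by []. Qed.

Lemma yeS m k s : yule_expect lam F m.+1 k s =
  (\int[lebesgue_measure]_(t in `[0%R, +oo[%classic)
     ((k%:R * lam * expR (- (k%:R * lam * t)))%:E * ((k%:R^-1)%:E *
          \sum_(i < k) yule_expect lam F m k.+1 (ysplit (yadvance s t) i))))%E.
Proof. by []. Qed.

Lemma main m : forall k s, (2 <= k)%N -> size (ybirths s) = k ->
  yule_expect lam F m k s = (cP k m * ypendant s + b * yinterior s + cC k m)%:E.
Proof.
elim: m => [|m IH] k s hk hs.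
- rewrite ye0.
  have hK : (2 <= k%:R :> R) by rewrite (ler_nat R 2 k).
  have kl : 0 < k%:R * lam by rewrite mulr_gt0 //; lra.
  transitivity (\int[lebesgue_measure]_(t in `[0%R, +oo[%classic)
     ((k%:R * lam * expR (- (k%:R * lam * t)))%:E *
        ((a * ypendant s + b * yinterior s) + (a * k%:R) * t)%:E))%E.
    apply: eq_integral => t _; rewrite /F pend_adv hs /=; congr (_ * _%:E)%E; ring.
  rewrite I3 //; congr EFin; rewrite /cP /cC.
  field; rewrite ?mulf_neq0 ?gt_eqF //; lra.
- rewrite yeS.
  have hK : (2 <= k%:R :> R) by rewrite (ler_nat R 2 k).
  have hM : (0 <= m%:R :> R) by [].
  have kl : 0 < k%:R * lam by rewrite mulr_gt0 //; lra.
  set c := cP k.+1 m.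
  set C := cC k.+1 m.
  set c2 := (c * (k%:R - 1) + b) / k%:R.
  transitivity (\int[lebesgue_measure]_(t in `[0%R, +oo[%classic)
     ((k%:R * lam * expR (- (k%:R * lam * t)))%:E *
        ((c2 * ypendant s + b * yinterior s + C) + (c2 * k%:R) * t)%:E))%E.
    apply: eq_integral => t _; congr (_ * _)%E.
    rewrite (eq_bigr (fun i : 'I_k => (c * ypendant (ysplit (yadvance s t) i)
        + b * yinterior (ysplit (yadvance s t) i) + C)%:E)); last first.
      move=> i _; apply: IH; first by apply: leqW.
      by rewrite size_split //= hs.
    rewrite sumEFin -EFinM; congr EFin.
    rewrite big_split big_split -!mulr_sumr sumP // sumI // sumr_const card_ord.
    rewrite pend_adv hs /= /c2 -mulr_natr.
    field; rewrite gt_eqF //; lra.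
  rewrite I3 //; congr EFin; rewrite /c2 /c /C /cP /cC -[k.+1]addn1 -[m.+1]addn1 !natrD.
  field; rewrite ?mulf_neq0 ?gt_eqF //; lra.
Qed.

End C.

Local Open Scope ring_scope.
Local Open Scope ereal_scope.

Theorem theorem1 (R : realType) (lam : R) (hlam : (0 < lam)%R) :
  (forall n : nat, (2 <= n)%N -> Pn lam n = (n%:R / (2 * lam))%:E) /\
  (forall n : nat, (3 <= n)%N ->
     In lam n * ((n - 2)%:R^-1)%:E = (1 / (2 * lam))%:E /\
     Pn lam n * (n%:R^-1)%:E = (1 / (2 * lam))%:E).
Proof.
have p0 : ypendant (yinit R) = 0%R by rewrite /ypendant /= !big_cons big_nil !subrr !addr0.
have HP n : (2 <= n)%N -> Pn lam n = (n%:R / (2 * lam))%:E.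
  move=> hn; rewrite /Pn.
  have -> : (fun s : ystate R => (ypendant s)%:E) =
     (fun s => (1 * ypendant s + 0 * yinterior s)%:E).
    by apply/funext => s; rewrite mul1r mul0r addr0.
  rewrite (@main R lam 1%R 0%R hlam) // p0 /=; congr EFin; rewrite /cC natrB //.
  have hn' : (2 <= n%:R :> R)%R by rewrite (ler_nat R 2 n).
  field; rewrite ?mulf_neq0 ?gt_eqF //; lra.
have HI n : (3 <= n)%N -> In lam n = ((n%:R - 2) / (2 * lam))%:E.
  move=> hn; rewrite /In.
  have -> : (fun s : ystate R => (yinterior s)%:E) =
     (fun s => (0 * ypendant s + 1 * yinterior s)%:E).
    by apply/funext => s; rewrite mul1r mul0r add0r.
  rewrite (@main R lam 0%R 1%R hlam) // p0 /=; congr EFin; rewrite /cC natrB //; last first.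
    by apply: leq_trans hn.
  have hn' : (3 <= n%:R :> R)%R by rewrite (ler_nat R 3 n).
  field; rewrite ?mulf_neq0 ?gt_eqF //; lra.
split; first exact: HP.
move=> n hn.
have hn' : (3 <= n%:R :> R)%R by rewrite (ler_nat R 3 n).
rewrite HI // HP; last by apply: leq_trans hn.
rewrite natrB; last by apply: leq_trans hn.
rewrite -!EFinM; split; congr EFin; field; rewrite ?mulf_neq0 ?gt_eqF //; lra.
Qed.
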